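(* In the setting described in the context, suppose there exists $(z_1,\dots,z_m)\in\boldsymbol{\mathcal H}$ with $-\big(\nabla_1\boldsymbol g_1(z_1,\dots,z_m),\dots,\nabla_m\boldsymbol g_m(z_1,\dots,z_m)\big)\in\partial\boldsymbol f(z_1,\dots,z_m)$, and there exists $\chi\in]0,+\infty[$ such that for all $(x_i),(y_i)\in\boldsymbol{\mathcal H}$, $$\sum_{i=1}^m\langle\nabla_i\boldsymbol g_i(x_1,\dots,x_m)-\nabla_i\boldsymbol g_i(y_1,\dots,y_m),x_i-y_i\rangle\ge\frac1\chi\sum_{i=1}^m\|\nabla_i\boldsymbol g_i(x_1,\dots,x_m)-\nabla_i\boldsymbol g_i(y_1,\dots,y_m)\|^2.$$ Let $\varepsilon\in]0,2/(\chi+1)[$ and let $(\gamma_n)_{n\in\mathbb N}$ be a sequence in $[\varepsilon,(2-\varepsilon)/\chi]$. For every $i$, let $x_{i,0}\in\mathcal H_i$ and let $(a_{i,n})_n,(b_{i,n})_n$ be absolutely summable sequences in $\mathcal H_i$. For every $n$ define $y_{i,n}=x_{i,n}-\gamma_n(\nabla_i\boldsymbol g_i(x_{1,n},\dots,x_{m,n})+a_{i,n})$ for $i=1,\dots,m$, and $(x_{1,n+1},\dots,x_{m,n+1})=\operatorname{prox}_{\gamma_n\boldsymbol f}(y_{1,n},\dots,y_{m,n})+(b_{1,n},\dots,b_{m,n})$. Then there exists a solution $(\overline x_1,\dots,\overline x_m)$ to Problem (P) such that for every $i$, $x_{i,n}\rightharpoonup\overline x_i$ and $\nabla_i\boldsymbol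 g_i(x_{1,n},\dots,x_{m,n})\to\nabla_i\boldsymbol g_i(\overline x_1,\dots,\overline x_m)$ strongly.
   Context: Let $m\ge2$ be an integer and let $\mathcal H_1,\dots,\mathcal H_m$ be real Hilbert spaces. Let $\boldsymbol{\mathcal H}=\mathcal H_1\oplus\cdots\oplus\mathcal H_m$ with inner product $\sum_i\langle x_i,y_i\rangle$. $\Gamma_0(\mathcal K)$ denotes the proper lower semicontinuous convex functions $\mathcal K\to\left]-\infty,+\infty\right]$. Let $\boldsymbol f\in\Gamma_0(\boldsymbol{\mathcal H})$ with subdifferential $\partial\boldsymbol f$. For each $i$, $\boldsymbol g_i:\boldsymbol{\mathcal H}\to\left]-\infty,+\infty\right]$ is such that for every $(x_1,\dots,x_m)$, $x\mapsto\boldsymbol g_i(x_1,\dots,x_{i-1},x,x_{i+1},\dots,x_m)$ is convex and differentiable on $\mathcal H_i$, with gradient $\nabla_i\boldsymbol g_i(x_1,\dots,x_m)$ at $x_i$; and $\sum_i\langle\nabla_i\boldsymbol g_i(\boldsymbol x)-\nabla_i\boldsymbol g_i(\boldsymbol y),x_i-y_i\rangle\ge0$ for all $\boldsymbol x,\boldsymbol y\in\boldsymbol{\mathcal H}$. Problem (P): find $x_1\in\mathcal H_1,\dots,x_m\in\mathcal H_m$ such that for each $i$, $x_i\in\operatorname{Argmin}_{x\in\mathcal H_i}\big(\boldsymbol f(x_1,\dots,x_{i-1},x,x_{i+1},\dots,x_m)+\boldsymbol g_i(x_1,\dots,x_{i-1},x,x_{i+1},\dots,x_m)\big)$. For $\varphi\in\Gamma_0(\mathcal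 K)$, $\operatorname{prox}_\varphi x=\operatorname{argmin}_{y}\big(\varphi(y)+\tfrac12\|x-y\|^2\big)$. $\rightharpoonup$ denotes weak convergence, $\to$ strong convergence. *)

(* Defs.v *)
(* Stdlib reals (R) for all analysis; mathcomp's ordinal type 'I_m
   (boot/fintype) only as the finite index set {1,...,m} (0-based here). *)
From mathcomp Require Import ssreflect ssrfun ssrbool eqtype ssrnat seq fintype.
From Stdlib Require Import Reals.
Open Scope R_scope.


Record Hilbert := mkHilbert {
  hcar :> Type;
  hzero : hcar;
  hadd : hcar -> hcar -> hcar;
  hopp : hcar -> hcar;
  hscal : R -> hcar -> hcar;
  hinner : hcar -> hcar -> R;
  hadd_assoc : forall x y z, hadd x (hadd y z) = hadd (hadd x y) z;
  hadd_comm : forall x y, hadd x y = hadd y x;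
  hadd_zero : forall x, hadd x hzero = x;
  hadd_opp : forall x, hadd x (hopp x) = hzero;
  hscal_one : forall x, hscal 1 x = x;
  hscal_assoc : forall a b x, hscal a (hscal b x) = hscal (a * b) x;
  hscal_distr_l : forall a x y, hscal a (hadd x y) = hadd (hscal a x) (hscal a y);
  hscal_distr_r : forall a b x, hscal (a + b) x = hadd (hscal a x) (hscal b x);
  hinner_sym : forall x y, hinner x y = hinner y x;
  hinner_add : forall x y z, hinner (hadd x y) z = hinner x z + hinner y z;
  hinner_scal : forall a x y, hinner (hscal a x) y = a * hinner x y;
  hinner_pos : forall x, 0 <= hinner x x;
  hinner_def : forall x, hinner x x = 0 -> x = hzero;
  hcomplete : forall u : nat -> hcar,
    (forall eps, 0 < eps -> exists N, forall p q, le N p -> le N q ->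
        sqrt (hinner (hadd (u p) (hopp (u q))) (hadd (u p) (hopp (u q)))) < eps) ->
    exists l, forall eps, 0 < eps -> exists N, forall n, le N n ->
        sqrt (hinner (hadd (u n) (hopp l)) (hadd (u n) (hopp l))) < eps
}.

Arguments hzero {h}.
Arguments hadd {h} _ _.
Arguments hopp {h} _.
Arguments hscal {h} _ _.
Arguments hinner {h} _ _.

Definition hsub {K : Hilbert} (x y : K) : K := hadd x (hopp y).
Definition hnorm {K : Hilbert} (x : K) : R := sqrt (hinner x x).

Definition strong_cv {K : Hilbert} (u : nat -> K) (l : K) : Prop :=
  Un_cv (fun n => hnorm (hsub (u n) l)) 0.
Definition weak_cv {K : Hilbert} (u : nat -> K) (l : K) : Prop :=
  forall y : K, Un_cv (fun n => hinner (u n) y) (hinner l y).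

Definition abs_summable {K : Hilbert} (a : nat -> K) : Prop :=
  exists S, Un_cv (fun N => sum_f_R0 (fun n => hnorm (a n)) N) S.

Inductive eR := Fin (r : R) | Pinf.

Definition Rext_le (a b : eR) : Prop :=
  match a, b with
  | _, Pinf => True
  | Pinf, Fin _ => False
  | Fin x, Fin y => x <= y
  end.
Definition Rext_lt (a b : eR) : Prop :=
  match a, b with
  | Fin x, Fin y => x < y
  | Fin _, Pinf => True
  | Pinf, _ => False
  end.
Definition Rext_add (a b : eR) : eR :=
  match a, b with
  | Fin x, Fin y => Fin (x + y)
  | _, _ => Pinf
  end.
(* scaling by a (strictly positive) real: t * (+oo) = +oo *)
Definition Rext_scal (t : R) (a : eR) : eR :=
  match a with Fin x => Fin (t * x) | Pinf => Pinf end.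

Definition proper_fun {V : Type} (f : V -> eR) : Prop :=
  exists x, f x <> Pinf.
Definition convex_fun {V : Type} (add : V -> V -> V) (scal : R -> V -> V)
    (f : V -> eR) : Prop :=
  forall x y t, 0 < t < 1 ->
    Rext_le (f (add (scal t x) (scal (1 - t) y)))
            (Rext_add (Rext_scal t (f x)) (Rext_scal (1 - t) (f y))).
Definition lsc_fun {V : Type} (dist : V -> V -> R) (f : V -> eR) : Prop :=
  forall x r, Rext_lt (Fin r) (f x) ->
    exists d, 0 < d /\ forall y, dist y x < d -> Rext_lt (Fin r) (f y).

Definition has_gradient {K : Hilbert} (phi : K -> eR) (x u : K) : Prop :=
  exists px, phi x = Fin px /\
  forall eps, 0 < eps -> exists d, 0 < d /\
    forall h : K, hnorm h < d ->
      exists ph, phi (hadd x h) = Fin ph /\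
        Rabs (ph - px - hinner u h) <= eps * hnorm h.


Section Product.
Variables (m : nat) (H : 'I_m -> Hilbert).

Definition Prod : Type := forall i : 'I_m, hcar (H i).

Definition sumI (F : 'I_m -> R) : R := foldr Rplus 0 (map F (enum 'I_m)).

Definition padd (x y : Prod) : Prod := fun i => hadd (x i) (y i).
Definition pscal (t : R) (x : Prod) : Prod := fun i => hscal t (x i).
Definition psub (x y : Prod) : Prod := fun i => hsub (x i) (y i).
Definition pinner (x y : Prod) : R := sumI (fun i => hinner (x i) (y i)).
Definition pnorm (x : Prod) : R := sqrt (pinner x x).

Definition Gamma0_prod (f : Prod -> eR) : Prop :=
  proper_fun f /\ lsc_fun (fun x y => pnorm (psub x y)) f /\ convex_fun padd pscal f.

Definition subdiff_prod (f : Prod -> eR) (x u : Prod) : Prop :=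
  exists fx, f x = Fin fx /\
    forall y, Rext_le (Fin (fx + pinner (psub y x) u)) (f y).

Definition is_prox_prod (gam : R) (f : Prod -> eR) (y p : Prod) : Prop :=
  forall q,
    Rext_le (Rext_add (Rext_scal gam (f p)) (Fin (/2 * pnorm (psub y p) ^ 2)))
            (Rext_add (Rext_scal gam (f q)) (Fin (/2 * pnorm (psub y q) ^ 2))).

(* (x_1,...,x_{i-1}, v, x_{i+1},...,x_m) *)
Definition upd (x : Prod) (i : 'I_m) (v : H i) : Prod :=
  fun j => match @eqP _ i j with
           | ReflectT e => eq_rect i (fun k => hcar (H k)) v j e
           | ReflectF _ => x j
           end.

Definition solves_P (f : Prod -> eR) (g : 'I_m -> Prod -> eR) (x : Prod) : Prop :=
  forall i (v : H i),
    Rext_le (Rext_add (f (upd x i (x i))) (g i (upd x i (x i))))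
            (Rext_add (f (upd x i v)) (g i (upd x i v))).

End Product.

Arguments sumI {m} F.
Arguments Prod {m} H.
Arguments padd {m H} x y.
Arguments pscal {m H} t x.
Arguments psub {m H} x y.
Arguments pinner {m H} x y.
Arguments pnorm {m H} x.
Arguments Gamma0_prod {m H} f.
Arguments subdiff_prod {m H} f x u.
Arguments is_prox_prod {m H} gam f y p.
Arguments upd {m H} x i v.
Arguments solves_P {m H} f g x.

(* Main.v *)
Require Import Defs.
From mathcomp Require Import ssreflect ssrfun ssrbool eqtype ssrnat seq fintype.
From Stdlib Require Import Reals.
From Stdlib Require Import Lra Psatz ClassicalEpsilon Classical ZArith Lia FunctionalExtensionality.
Open Scope R_scope.

Arguments hadd_assoc {h} x y z.
Arguments hadd_comm {h} x y.
Arguments hadd_zero {h} x.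
Arguments hadd_opp {h} x.
Arguments hscal_one {h} x.
Arguments hscal_assoc {h} a b x.
Arguments hscal_distr_l {h} a x y.
Arguments hscal_distr_r {h} a b x.
Arguments hinner_sym {h} x y.
Arguments hinner_add {h} x y z.
Arguments hinner_scal {h} a x y.
Arguments hinner_pos {h} x.
Arguments hinner_def {h} x.
Arguments hcomplete {h} u.

Section HAlg.
Context {K : Hilbert}.
Implicit Types x y z : K.

Lemma inner_addr x y z : hinner x (hadd y z) = hinner x y + hinner x z.
Proof. rewrite hinner_sym hinner_add (hinner_sym y) (hinner_sym z). reflexivity. Qed.
Lemma inner_scalr a x y : hinner x (hscal a y) = a * hinner x y.
Proof. rewrite hinner_sym hinner_scal hinner_sym. reflexivity. Qed.
Lemma inner0l y : hinner (@hzero K) y = 0.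
Proof.
  have E := hinner_add (@hzero K) hzero y. rewrite hadd_zero in E. lra.
Qed.
Lemma inner0r y : hinner y (@hzero K) = 0.
Proof. rewrite hinner_sym; apply inner0l. Qed.
Lemma inner_oppl x y : hinner (hopp x) y = - hinner x y.
Proof.
  have E := hinner_add x (hopp x) y. rewrite hadd_opp inner0l in E. lra.
Qed.
Lemma inner_oppr x y : hinner x (hopp y) = - hinner x y.
Proof. rewrite hinner_sym inner_oppl hinner_sym. reflexivity. Qed.
Lemma inner_subl x y z : hinner (hsub x y) z = hinner x z - hinner y z.
Proof. unfold hsub. rewrite hinner_add inner_oppl. ring. Qed.
Lemma inner_subr x y z : hinner z (hsub x y) = hinner z x - hinner z y.
Proof. unfold hsub. rewrite inner_addr inner_oppr. ring. Qed.

Lemma hsub_zero_eq x y : hsub x y = hzero -> x = y.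
Proof.
  unfold hsub => E.
  have : x = hadd (hadd x (hopp y)) y.
  { rewrite -hadd_assoc (hadd_comm (hopp y)) hadd_opp hadd_zero. reflexivity. }
  rewrite E hadd_comm hadd_zero. auto.
Qed.

Lemma veq x y : (forall z, hinner x z = hinner y z) -> x = y.
Proof.
  move=> Hz. apply hsub_zero_eq. apply hinner_def.
  rewrite inner_subl !Hz. ring.
Qed.

Lemma veq0 x y : hinner (hsub x y) (hsub x y) = 0 -> x = y.
Proof. move=> E. apply hsub_zero_eq. apply hinner_def. exact E. Qed.

Lemma hnorm_nonneg x : 0 <= hnorm x.
Proof. unfold hnorm. apply sqrt_pos. Qed.
Lemma hnorm2 x : hnorm x ^ 2 = hinner x x.
Proof. unfold hnorm. rewrite /= Rmult_1_r. apply sqrt_sqrt. apply hinner_pos. Qed.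
Lemma hnorm_sq x : hnorm x * hnorm x = hinner x x.
Proof. unfold hnorm. apply sqrt_sqrt. apply hinner_pos. Qed.

Lemma sq_le_le a b : 0 <= a -> 0 <= b -> a * a <= b * b -> a <= b.
Proof. move=> Ha Hb H. nra. Qed.
Lemma sq_lt_lt a b : 0 <= a -> 0 <= b -> a * a < b * b -> a < b.
Proof. move=> Ha Hb H. nra. Qed.

Lemma CS2 x y : hinner x y * hinner x y <= hinner x x * hinner y y.
Proof.
  have Hy := hinner_pos y.
  destruct (Req_dec (hinner y y) 0) as [E|E].
  - have ->: y = hzero by apply hinner_def.
    rewrite !inner0r. nra.
  - set t := - hinner x y / hinner y y.
    have P := hinner_pos (hadd x (hscal t y)).
    rewrite hinner_add !inner_addr !hinner_scal !inner_scalr (hinner_sym y x) in P.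
    have Hp : 0 < hinner y y by lra.
    have Ht : t * hinner y y = - hinner x y by unfold t; field; lra.
    nra.
Qed.

Lemma CS x y : Rabs (hinner x y) <= hnorm x * hnorm y.
Proof.
  apply sq_le_le. apply Rabs_pos. apply Rmult_le_pos; apply hnorm_nonneg.
  have ->: Rabs (hinner x y) * Rabs (hinner x y) = hinner x y * hinner x y.
  { rewrite -Rabs_mult. apply Rabs_right. nra. }
  have ->: hnorm x * hnorm y * (hnorm x * hnorm y) = (hnorm x * hnorm x) * (hnorm y * hnorm y) by ring.
  rewrite !hnorm_sq. apply CS2.
Qed.

Lemma CS' x y : hinner x y <= hnorm x * hnorm y.
Proof. have := CS x y. have := Rle_abs (hinner x y). lra. Qed.
Lemma CS'' x y : - (hnorm x * hnorm y) <= hinner x y.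
Proof. have := CS x y. have := Rle_abs (- hinner x y). rewrite Rabs_Ropp. lra. Qed.

Lemma hnorm_add x y : hnorm (hadd x y) <= hnorm x + hnorm y.
Proof.
  apply sq_le_le. apply hnorm_nonneg. have := hnorm_nonneg x; have := hnorm_nonneg y; lra.
  rewrite hnorm_sq hinner_add !inner_addr (hinner_sym y x).
  have := CS' x y. have := hnorm_sq x. have := hnorm_sq y. nra.
Qed.

Lemma hnorm_scal a x : hnorm (hscal a x) = Rabs a * hnorm x.
Proof.
  unfold hnorm. rewrite hinner_scal inner_scalr -Rmult_assoc sqrt_mult.
  - f_equal. have ->: a * a = Rsqr a by reflexivity. rewrite sqrt_Rsqr_abs. reflexivity.
  - nra.
  - apply hinner_pos.
Qed.

Lemma hnorm_opp x : hnorm (hopp x) = hnorm x.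
Proof. unfold hnorm. rewrite inner_oppl inner_oppr. f_equal; ring. Qed.

Lemma hnorm_sub_sym x y : hnorm (hsub x y) = hnorm (hsub y x).
Proof. unfold hnorm. f_equal. rewrite !inner_subl !inner_subr. rewrite (hinner_sym x y). ring. Qed.

Lemma hnorm_sub_tri x y z : hnorm (hsub x z) <= hnorm (hsub x y) + hnorm (hsub y z).
Proof.
  have ->: hsub x z = hadd (hsub x y) (hsub y z).
  { apply veq => w. rewrite hinner_add !inner_subl. ring. }
  apply hnorm_add.
Qed.

Lemma hnorm_sub_le x y : hnorm (hsub x y) <= hnorm x + hnorm y.
Proof. unfold hsub. rewrite -(hnorm_opp y). apply hnorm_add. Qed.

Lemma hnorm_zero : hnorm (@hzero K) = 0.
Proof. unfold hnorm. rewrite inner0l. apply sqrt_0. Qed.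

Lemma hnorm_eq0 x : hnorm x = 0 -> x = hzero.
Proof. move=> E. apply hinner_def. rewrite -hnorm_sq E. ring. Qed.

Lemma hnorm_rev_tri x y : Rabs (hnorm x - hnorm y) <= hnorm (hsub x y).
Proof.
  have h1 := hnorm_sub_tri x y hzero. have h2 := hnorm_sub_tri y x hzero.
  have e: forall v : K, hsub v hzero = v.
  { move=> v; apply veq => w. rewrite inner_subl inner0l. ring. }
  rewrite !e in h1 h2. rewrite (hnorm_sub_sym y x) in h2.
  apply Rabs_le. lra.
Qed.

End HAlg.

Ltac iexp := repeat progress rewrite ?hinner_add ?inner_addr ?hinner_scal ?inner_scalr
   ?inner_oppl ?inner_oppr ?inner_subl ?inner_subr ?inner0l ?inner0r.

Lemma Rabs_le_inv a b : Rabs a <= b -> - b <= a <= b.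
Proof. move=> H. have := Rle_abs a. have := Rle_abs (- a). rewrite Rabs_Ropp. lra. Qed.

Ltac isym a b := rewrite ?(hinner_sym b a).

Lemma fchoice {A B : Type} (P : A -> B -> Prop) :
  (forall a, exists b, P a b) -> exists g : A -> B, forall a, P a (g a).
Proof.
  move=> H. exists (fun a => proj1_sig (constructive_indefinite_description _ (H a))).
  move=> a. exact (proj2_sig (constructive_indefinite_description _ (H a))).
Qed.

Lemma dchoice {A : Type} {B : A -> Type} (P : forall a, B a -> Prop) :
  (forall a, exists b, P a b) -> exists g : (forall a, B a), forall a, P a (g a).
Proof.
  move=> H. exists (fun a => proj1_sig (constructive_indefinite_description _ (H a))).
  move=> a. exact (proj2_sig (constructive_indefinite_description _ (H a))).
Qed.

Lemma cv_unfold (u : nat -> R) l : Un_cv u l ->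
  forall eps, 0 < eps -> exists N, forall n, (N <= n)%coq_nat -> Rabs (u n - l) < eps.
Proof. move=> H eps He. destruct (H eps He) as [N HN]. exists N => n Hn. apply HN. lia. Qed.

Lemma cv_fold (u : nat -> R) l :
  (forall eps, 0 < eps -> exists N, forall n, (N <= n)%coq_nat -> Rabs (u n - l) < eps) -> Un_cv u l.
Proof. move=> H eps He. destruct (H eps He) as [N HN]. exists N => n Hn. apply HN. lia. Qed.

Lemma archi_inv eps : 0 < eps -> exists N : nat, forall n, (N <= n)%coq_nat -> / INR (S n) < eps.
Proof.
  move=> He. destruct (archimed (/ eps)) as [H1 _].
  have Hz : (0 <= up (/eps))%Z.
  { apply le_IZR. have := Rinv_0_lt_compat _ He. lra. }
  exists (Z.to_nat (up (/ eps))) => n Hn.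
  have HI : / eps < INR (S n).
  { rewrite S_INR. have: INR (Z.to_nat (up (/eps))) <= INR n by apply le_INR.
    rewrite INR_IZR_INZ Z2Nat.id //. have := pos_INR n. lra. }
  have Hs : 0 < INR (S n) by apply lt_0_INR; lia.
  rewrite -(Rinv_inv eps). apply Rinv_lt_contravar. apply Rmult_lt_0_compat => //.
  apply Rinv_0_lt_compat => //. exact HI.
Qed.

Section Proj.
Context {K : Hilbert}.

Definition closedK (S : K -> Prop) :=
  forall (s : nat -> K) l, (forall k, S (s k)) -> strong_cv s l -> S l.
Definition convexK (S : K -> Prop) :=
  forall a b t, 0 <= t <= 1 -> S a -> S b -> S (hadd (hscal t a) (hscal (1 - t) b)).

Lemma complete_cv (u : nat -> K) :
  (forall eps, 0 < eps -> exists N, forall p q, (N <= p)%coq_nat -> (N <= q)%coq_nat ->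
        hnorm (hsub (u p) (u q)) < eps) -> exists l, strong_cv u l.
Proof.
  move=> H. destruct (hcomplete u H) as [l Hl]. exists l.
  apply cv_fold => eps He. destruct (Hl eps He) as [N HN]. exists N => n Hn.
  rewrite Rminus_0_r Rabs_right. apply HN; lia. apply Rle_ge, hnorm_nonneg.
Qed.

Definition Dst (y q : K) := hinner (hsub y q) (hsub y q).

Lemma Dst_comb y p q t :
  Dst y (hadd (hscal t q) (hscal (1 - t) p)) =
  Dst y p - 2 * t * hinner (hsub y p) (hsub q p) + t * t * hinner (hsub q p) (hsub q p).
Proof. unfold Dst. iexp. isym y q. isym y p. isym p q. ring. Qed.

Lemma small_pos_le X N : 0 <= N -> (forall t, 0 < t <= 1 -> X <= t * N) -> X <= 0.
Proof.
  move=> HN H. destruct (Rle_lt_dec X 0) as [|HX] => //.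
  set t := Rmin 1 (X / (N + 1)).
  have Ht1 : t <= 1 by apply Rmin_l.
  have Ht2 : t <= X / (N+1) by apply Rmin_r.
  have Ht0 : 0 < t. { apply Rmin_pos. lra. apply Rdiv_lt_0_compat; lra. }
  have := H t (conj Ht0 Ht1).
  have : t * (N + 1) <= X. { have := Rmult_le_compat_r (N+1) _ _ (ltac:(lra)) Ht2.
    have ->: X / (N + 1) * (N + 1) = X by field; lra. auto. }
  nra.
Qed.

Lemma proj_exists (S : K -> Prop) (y : K) :
  closedK S -> convexK S -> (exists a, S a) ->
  exists p, S p /\ forall q, S q -> hinner (hsub y p) (hsub q p) <= 0.
Proof.
  move=> Hcl Hcv [a Ha].
  pose E := fun r => exists q, S q /\ r = - Dst y q.
  have HEb : bound E.
  { exists 0 => r [q [_ ->]]. unfold Dst. have := hinner_pos (hsub y q). lra. }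
  destruct (completeness E HEb (ex_intro _ (- Dst y a) (ex_intro _ a (conj Ha erefl)))) as [mm [Hub Hlub]].
  set d2 := - mm.
  have Hlow : forall q, S q -> d2 <= Dst y q.
  { move=> q Hq. have := Hub (- Dst y q) (ex_intro _ q (conj Hq erefl)). unfold d2. lra. }
  have Happ : forall eps, 0 < eps -> exists q, S q /\ Dst y q < d2 + eps.
  { move=> eps He. apply NNPP => Hn.
    have : is_upper_bound E (mm - eps).
    { move=> r [q [Hq ->]]. destruct (Rle_lt_dec (- Dst y q) (mm - eps)) as [|h] => //.
      exfalso. apply Hn. exists q. split => //. unfold d2. lra. }
    move=> /Hlub. lra. }
  have Hd2 : 0 <= d2.
  { have : mm <= 0. { apply Hlub => r [q [_ ->]]. unfold Dst. have := hinner_pos (hsub y q). lra. }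
    unfold d2; lra. }
  destruct (fchoice (fun (n : nat) q => S q /\ Dst y q < d2 + / INR n.+1)) as [qn Hqn].
  { move=> n. apply Happ. apply Rinv_0_lt_compat, lt_0_INR. lia. }
  (* parallelogram *)
  have Hpar : forall n k, hinner (hsub (qn n) (qn k)) (hsub (qn n) (qn k)) <= 2 * / INR n.+1 + 2 * / INR k.+1.
  { move=> n k. destruct (Hqn n) as [Sn Dn]. destruct (Hqn k) as [Sk Dk].
    have Hm := Hlow _ (Hcv (qn n) (qn k) (/2) ltac:(lra) Sn Sk).
    have Id : hinner (hsub (qn n) (qn k)) (hsub (qn n) (qn k)) =
      2 * Dst y (qn n) + 2 * Dst y (qn k) - 4 * Dst y (hadd (hscal (/2) (qn n)) (hscal (1 - /2) (qn k))).
    { unfold Dst. iexp. isym y (qn n). isym y (qn k). isym (qn n) (qn k). field. }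
    lra. }
  destruct (complete_cv qn) as [p Hp].
  { move=> eps He. destruct (archi_inv (eps * eps / 4)) as [N HN]. nra.
    exists N => n k Hn Hk. apply sq_lt_lt. apply hnorm_nonneg. lra.
    rewrite hnorm_sq. have := Hpar n k. have := HN n Hn. have := HN k Hk. lra. }
  have Sp : S p. { apply (Hcl qn) => //. move=> k; apply (Hqn k). }
  have Dp : Dst y p <= d2.
  { apply Rnot_lt_le => Hlt. set eta := Dst y p - d2.
    have Heta : 0 < eta by unfold eta; lra.
    have Bnd : forall n, hnorm (hsub y (qn n)) <= d2 + 2.
    { move=> n. apply sq_le_le. apply hnorm_nonneg. lra. rewrite hnorm_sq.
      destruct (Hqn n) as [_ Dn]. unfold Dst in Dn.
      have : / INR n.+1 <= 1. { rewrite -Rinv_1. apply Rinv_le_contravar. lra.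
        rewrite S_INR. have := pos_INR n. lra. }
      nra. }
    set r := Rmin 1 (eta / (2 * (2 * (d2 + 2) + 1))).
    have Hr0 : 0 < r. { apply Rmin_pos. lra. apply Rdiv_lt_0_compat; lra. }
    destruct (cv_unfold _ _ Hp r Hr0) as [N1 HN1].
    destruct (archi_inv (eta / 2)) as [N2 HN2]. lra.
    have [n [Hn1 Hn2]] : exists n, (N1 <= n)%coq_nat /\ (N2 <= n)%coq_nat by exists (max N1 N2); lia.
    have h1 := HN1 n Hn1. rewrite Rminus_0_r Rabs_right in h1; last apply Rle_ge, hnorm_nonneg.
    have h2 := HN2 n Hn2.
    destruct (Hqn n) as [_ Dn].
    have Id : Dst y p = Dst y (qn n) + 2 * hinner (hsub y (qn n)) (hsub (qn n) p)
                        + hinner (hsub (qn n) p) (hsub (qn n) p).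
    { unfold Dst. iexp. isym y (qn n). isym y p. isym p (qn n). ring. }
    have C1 := CS' (hsub y (qn n)) (hsub (qn n) p).
    have Bn := Bnd n. have Hq := hnorm_nonneg (hsub (qn n) p).
    have Hq2 := hnorm_sq (hsub (qn n) p).
    have Hyn := hnorm_nonneg (hsub y (qn n)).
    have Hr1 : r <= 1 by apply Rmin_l.
    have Hr2 : r <= eta / (2 * (2 * (d2 + 2) + 1)) by apply Rmin_r.
    have Hr3 : r * (2 * (2 * (d2 + 2) + 1)) <= eta.
    { have := Rmult_le_compat_r (2 * (2 * (d2 + 2) + 1)) _ _ ltac:(lra) Hr2.
      have ->: eta / (2 * (2 * (d2 + 2) + 1)) * (2 * (2 * (d2 + 2) + 1)) = eta by field; lra. auto. }
    set s := hnorm (hsub (qn n) p) in h1 Hq Hq2 C1.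
    have : s * hnorm (hsub y (qn n)) <= r * (d2 + 2) by nra.
    have : s * s <= r by nra.
    unfold eta in *. nra. }
  exists p. split => // q Hq.
  apply (small_pos_le _ (hinner (hsub q p) (hsub q p) / 2)).
  { have := hinner_pos (hsub q p). lra. }
  move=> t Ht.
  have Hz := Hlow _ (Hcv q p t ltac:(lra) Hq Sp).
  rewrite Dst_comb in Hz.
  have : 2 * t * hinner (hsub y p) (hsub q p) <= t * t * hinner (hsub q p) (hsub q p) by lra.
  move=> h. have : 2 * t * (hinner (hsub y p) (hsub q p) - t * (hinner (hsub q p) (hsub q p) / 2)) <= 0 by nra.
  move=> h2. have: hinner (hsub y p) (hsub q p) - t * (hinner (hsub q p) (hsub q p) / 2) <= 0.
  { apply Rnot_lt_le => h3. nra. }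
  lra.
Qed.

End Proj.

Section Hull.
Context {K : Hilbert}.

Lemma strong_cv_shift (s : nat -> K) l N : strong_cv s l -> strong_cv (fun k => s (N + k)%coq_nat) l.
Proof.
  move=> H. apply cv_fold => eps He. destruct (cv_unfold _ _ H eps He) as [M HM].
  exists M => n Hn. apply HM. lia.
Qed.

Lemma hull_point (v : nat -> K) (M : R) (P : nat -> Prop) :
  (forall n, hnorm (v n) <= M) -> (forall N, exists n, (N <= n)%coq_nat /\ P n) ->
  exists q, forall S : K -> Prop, closedK S -> convexK S ->
     (exists N, forall n, (N <= n)%coq_nat -> P n -> S (v n)) -> S q.
Proof.
  move=> HM Hinf.
  pose T := fun (N : nat) (y : K) => forall S : K -> Prop, closedK S -> convexK S ->
     (forall n, (N <= n)%coq_nat -> P n -> S (v n)) -> S y.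
  have Tcl : forall N, closedK (T N).
  { move=> N s l Hs Hc S HS1 HS2 HS3. apply (HS1 s) => // k. apply Hs => //. }
  have Tcv : forall N, convexK (T N).
  { move=> N a b t Ht Ha Hb S HS1 HS2 HS3. apply HS2 => //. apply Ha => //. apply Hb => //. }
  have Tne : forall N, exists a, T N a.
  { move=> N. destruct (Hinf N) as [n [Hn Pn]]. exists (v n) => S _ _ HS. apply HS => //. }
  have Tmono : forall N N' y, (N <= N')%coq_nat -> T N' y -> T N y.
  { move=> N N' y HN Hy S H1 H2 H3. apply Hy => // n Hn Pn. apply H3 => //. lia. }
  destruct (fchoice (fun N p => T N p /\ forall q, T N q -> hinner (hsub hzero p) (hsub q p) <= 0))
    as [qq Hqq].
  { move=> N. apply proj_exists => //. }
  pose a := fun N => hinner (qq N) (qq N).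
  have Key : forall N N', (N <= N')%coq_nat ->
      hinner (hsub (qq N') (qq N)) (hsub (qq N') (qq N)) <= a N' - a N.
  { move=> N N' HN. destruct (Hqq N) as [_ HV]. have := HV (qq N') (Tmono _ _ _ HN (proj1 (Hqq N'))).
    unfold a. iexp. isym (qq N) (qq N'). lra. }
  have Bnd : forall N, a N <= M * M.
  { move=> N. destruct (Hinf N) as [n [Hn Pn]].
    have Tv : T N (v n) by move=> S _ _ HS; apply HS.
    destruct (Hqq N) as [_ HV]. have := HV _ Tv. have := hinner_pos (hsub (v n) (qq N)).
    have := hnorm_sq (v n). have := HM n. have := hnorm_nonneg (v n). unfold a. iexp.
    isym (qq N) (v n). nra. }
  have Hgr : Un_growing a.
  { move=> N. have := Key N (S N) ltac:(lia). have := hinner_pos (hsub (qq (S N)) (qq N)). lra. }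
  destruct (growing_cv a Hgr) as [la Hla].
  { exists (M * M) => r [i ->]. apply Bnd. }
  destruct (complete_cv qq) as [q Hq].
  { move=> eps He. destruct (cv_unfold _ _ Hla (eps * eps / 2)) as [N HN]. nra.
    exists N => p k Hp Hk. apply sq_lt_lt. apply hnorm_nonneg. lra. rewrite hnorm_sq.
    have h1 := HN p Hp. have h2 := HN k Hk.
    destruct (Nat.le_ge_cases p k) as [Hpk|Hpk].
    - have := Key p k Hpk. have -> : hinner (hsub (qq p) (qq k)) (hsub (qq p) (qq k)) =
          hinner (hsub (qq k) (qq p)) (hsub (qq k) (qq p)) by iexp; isym (qq p) (qq k); ring.
      apply Rabs_def2 in h1; apply Rabs_def2 in h2. lra.
    - have := Key k p Hpk. apply Rabs_def2 in h1; apply Rabs_def2 in h2. lra. }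
  exists q => S HS1 HS2 [N HN].
  have : T N q.
  { apply (Tcl N (fun k => qq (N + k)%coq_nat)).
    - move=> k. apply (Tmono N (N + k)%coq_nat) => //. lia. apply (Hqq _).
    - apply strong_cv_shift => //. }
  move=> HT. apply HT => //.
Qed.

End Hull.

Section Conv.
Context {K : Hilbert}.

Definition subdiffK (f : K -> eR) (x u : K) : Prop :=
  exists fx, f x = Fin fx /\ forall y, Rext_le (Fin (fx + hinner (hsub y x) u)) (f y).

Definition proxK (gam : R) (f : K -> eR) (y p : K) : Prop :=
  forall q,
    Rext_le (Rext_add (Rext_scal gam (f p)) (Fin (/2 * hnorm (hsub y p) ^ 2)))
            (Rext_add (Rext_scal gam (f q)) (Fin (/2 * hnorm (hsub y q) ^ 2))).

Lemma small_pos_lt X N : 0 <= N -> (forall t, 0 < t < 1 -> X <= t * N) -> X <= 0.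
Proof.
  move=> HN H. apply (small_pos_le X N HN) => t Ht.
  have := H (t/2) ltac:(lra). nra.
Qed.

Lemma conv_fin (f : K -> eR) a b t fa fb : convex_fun hadd hscal f -> 0 < t < 1 ->
  f a = Fin fa -> f b = Fin fb ->
  exists fc, f (hadd (hscal t a) (hscal (1 - t) b)) = Fin fc /\ fc <= t * fa + (1 - t) * fb.
Proof.
  move=> Hc Ht Ha Hb. have := Hc a b t Ht. rewrite Ha Hb /=.
  case: (f _) => [r|] //= Hr. exists r. split => //.
Qed.

Lemma prox_sub gam f y p : 0 < gam -> proper_fun f -> convex_fun hadd hscal f ->
  proxK gam f y p -> subdiffK f p (hscal (/ gam) (hsub y p)).
Proof.
  move=> Hg [q0 Hq0] Hc Hp.
  have [fp Efp] : exists fp, f p = Fin fp.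
  { move: (Hp q0). case E: (f q0) => [r|] //. case: (f p) => [s|] //= _. by exists s. }
  exists fp. split => // q. case Eq: (f q) => [fq|] //=.
  have Key : gam * fp - gam * fq + hinner (hsub y p) (hsub q p) <= 0.
  { apply (small_pos_lt _ (hinner (hsub q p) (hsub q p) / 2)).
    { have := hinner_pos (hsub q p). lra. }
    move=> t Ht. destruct (conv_fin f q p t fq fp Hc Ht Eq Efp) as [fc [Efc Hfc]].
    have := Hp (hadd (hscal t q) (hscal (1 - t) p)). rewrite !hnorm2 Efp Efc /=.
    have := Dst_comb y p q t. unfold Dst => ->.
    move=> h. have : t * (gam * fp - gam * fq + hinner (hsub y p) (hsub q p)) <= t * (t * (hinner (hsub q p) (hsub q p) / 2)) by nra.
    move=> h2. apply Rmult_le_reg_l with t. lra. lra. }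
  rewrite inner_scalr. rewrite hinner_sym.
  set X := hinner (hsub y p) (hsub q p) in Key *.
  have E : X = gam * (/ gam * X) by field; lra.
  rewrite E in Key. set Y := / gam * X in Key *.
  have : gam * (fp + Y - fq) <= 0 by lra.
  move=> h. destruct (Rle_lt_dec (fp + Y) fq) as [|h2] => //. nra.
Qed.

Lemma subdiff_mono f x x' u u' : subdiffK f x u -> subdiffK f x' u' ->
  0 <= hinner (hsub x x') (hsub u u').
Proof.
  move=> [fx [Ex Hx]] [fx' [Ex' Hx']].
  have := Hx x'. rewrite Ex' /=. have := Hx' x. rewrite Ex /=. iexp. isym x u. isym x' u. isym x u'. isym x' u'. lra.
Qed.

Lemma grad_sub (phi : K -> eR) x u : convex_fun hadd hscal phi -> has_gradient phi x u ->
  subdiffK phi x u.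
Proof.
  move=> Hc [px [Ex Hd]]. exists px. split => // v.
  case Ev: (phi v) => [pv|] //=.
  set w := hsub v x.
  have Hw := hnorm_nonneg w.
  have Key : px + hinner w u - pv <= 0.
  { apply (small_pos_le _ (hnorm w)) => // eps He.
    destruct (Hd eps ltac:(lra)) as [d [Hd0 Hdd]].
    set t := Rmin (/2) (d / (2 * (hnorm w + 1))).
    have Ht0 : 0 < t. { apply Rmin_pos. lra. apply Rdiv_lt_0_compat; lra. }
    have Ht1 : t <= /2 by apply Rmin_l.
    have Ht2 : t <= d / (2 * (hnorm w + 1)) by apply Rmin_r.
    have Ht3 : t * (2 * (hnorm w + 1)) <= d.
    { have := Rmult_le_compat_r (2 * (hnorm w + 1)) _ _ ltac:(lra) Ht2.
      have ->: d / (2 * (hnorm w + 1)) * (2 * (hnorm w + 1)) = d by field; lra. auto. }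
    have Hh : hnorm (hscal t w) < d. { rewrite hnorm_scal Rabs_right. nra. lra. }
    destruct (Hdd _ Hh) as [ph [Eph Hph]].
    have Eq : hadd x (hscal t w) = hadd (hscal t v) (hscal (1 - t) x).
    { apply veq => z. unfold w. iexp. ring. }
    rewrite Eq in Eph.
    destruct (conv_fin phi v x t pv px Hc ltac:(lra) Ev Ex) as [fc [Efc Hfc]].
    rewrite Efc in Eph. injection Eph => Eph'. subst fc.
    rewrite hnorm_scal (Rabs_right t) in Hph; last lra.
    rewrite inner_scalr in Hph. apply Rabs_le_inv in Hph.
    rewrite hinner_sym.
    have : t * (px + hinner u w - pv) <= t * (eps * hnorm w) by nra.
    move=> h. apply Rmult_le_reg_l with t => //. }
  move: Key; rewrite /w; lra.
Qed.

End Conv.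

Definition ev (Q : nat -> Prop) := exists N, forall n, (N <= n)%coq_nat -> Q n.

Lemma ev_and Q1 Q2 : ev Q1 -> ev Q2 -> ev (fun n => Q1 n /\ Q2 n).
Proof. move=> [N1 H1] [N2 H2]. exists (max N1 N2) => n Hn. split; [apply H1|apply H2]; lia. Qed.
Lemma ev_impl (Q1 Q2 : nat -> Prop) : (forall n, Q1 n -> Q2 n) -> ev Q1 -> ev Q2.
Proof. move=> H [N HN]. exists N => n Hn. apply H, HN, Hn. Qed.

Lemma o0_ev u : Un_cv u 0 -> forall eps, 0 < eps -> ev (fun n => Rabs (u n) < eps).
Proof. move=> H eps He. destruct (cv_unfold _ _ H eps He) as [N HN]. exists N => n Hn.
  have := HN n Hn. rewrite Rminus_0_r. auto. Qed.

Lemma o0_of_ev u : (forall eps, 0 < eps -> ev (fun n => Rabs (u n) < eps)) -> Un_cv u 0.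
Proof. move=> H. apply cv_fold => eps He. destruct (H eps He) as [N HN]. exists N => n Hn.
  rewrite Rminus_0_r. auto. Qed.

Lemma o0_squeeze (t w : nat -> R) : (forall n, Rabs (t n) <= w n) -> Un_cv w 0 -> Un_cv t 0.
Proof.
  move=> H Hw. apply o0_of_ev => eps He. apply (ev_impl _ _ ^~ (o0_ev _ Hw eps He)) => n h.
  have := H n. have := Rle_abs (w n). lra.
Qed.

Lemma o0_plus u v : Un_cv u 0 -> Un_cv v 0 -> Un_cv (fun n => u n + v n) 0.
Proof. move=> Hu Hv. have := CV_plus _ _ _ _ Hu Hv. rewrite Rplus_0_r. auto. Qed.

Lemma o0_scal c u : Un_cv u 0 -> Un_cv (fun n => c * u n) 0.
Proof.
  move=> Hu. apply o0_of_ev => eps He.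
  have Hc : 0 < Rabs c + 1 by have := Rabs_pos c; lra.
  apply (ev_impl _ _ ^~ (o0_ev _ Hu (eps / (Rabs c + 1)) ltac:(apply Rdiv_lt_0_compat; lra))) => n h.
  rewrite Rabs_mult. have := Rabs_pos (u n). have := Rabs_pos c.
  have : Rabs (u n) * (Rabs c + 1) < eps.
  { have := Rmult_lt_compat_r (Rabs c + 1) _ _ Hc h. have ->: eps / (Rabs c + 1) * (Rabs c + 1) = eps by field; lra. auto. }
  nra.
Qed.

Lemma o0_mulb (v u : nat -> R) M : (forall n, Rabs (v n) <= M) -> Un_cv u 0 -> Un_cv (fun n => v n * u n) 0.
Proof.
  move=> Hv Hu. apply (o0_squeeze _ (fun n => M * Rabs (u n))).
  - move=> n. rewrite Rabs_mult. apply Rmult_le_compat_r. apply Rabs_pos. apply Hv.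
  - apply o0_scal. have := cv_cvabs _ _ Hu. rewrite Rabs_R0. auto.
Qed.

Lemma o0_abs u : Un_cv u 0 -> Un_cv (fun n => Rabs (u n)) 0.
Proof. move=> Hu. have := cv_cvabs _ _ Hu. rewrite Rabs_R0. auto. Qed.

Lemma cv_shift u l : Un_cv u l -> Un_cv (fun n => u (S n)) l.
Proof. move=> H eps He. destruct (H eps He) as [N HN]. exists N => n Hn. apply HN. lia. Qed.

Lemma series_term0 s Sm : Un_cv (sum_f_R0 s) Sm -> Un_cv s 0.
Proof.
  move=> H. apply cv_fold => eps He. destruct (cv_unfold _ _ H (eps/2) ltac:(lra)) as [N HN].
  exists (S N) => n Hn. destruct n as [|n]. lia.
  have h1 := HN n ltac:(lia). have h2 := HN (S n) ltac:(lia). simpl in h2.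
  apply Rabs_def2 in h1. apply Rabs_def2 in h2. apply Rabs_def1; lra.
Qed.

Lemma series_le s Sm : (forall n, 0 <= s n) -> Un_cv (sum_f_R0 s) Sm -> forall n, sum_f_R0 s n <= Sm.
Proof.
  move=> Hs H. apply growing_ineq => //. move=> n /=. have := Hs (S n). lra.
Qed.

Lemma series_term_le s Sm : (forall n, 0 <= s n) -> Un_cv (sum_f_R0 s) Sm -> forall n, s n <= Sm.
Proof.
  move=> Hs H n. have := series_le s Sm Hs H n. destruct n as [|n] => //=.
  have := cond_pos_sum s n Hs. lra.
Qed.

Lemma conv_bounded u l : Un_cv u l -> exists M, forall n, Rabs (u n) <= M.
Proof.
  move=> H. destruct (cv_unfold _ _ H 1 ltac:(lra)) as [N HN].
  have : forall N, exists M, forall n, (n < N)%coq_nat -> Rabs (u n) <= M.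
  { elim=> [|k [M HM]]. exists 0 => n Hn; lia.
    exists (Rmax M (Rabs (u k))) => n Hn. destruct (Nat.eq_dec n k) as [->|Hne].
    apply Rmax_r. apply Rle_trans with M. apply HM; lia. apply Rmax_l. }
  move=> /(_ N) [M HM]. exists (Rmax M (Rabs l + 1)) => n.
  destruct (Nat.lt_ge_cases n N) as [h|h].
  - apply Rle_trans with M. auto. apply Rmax_l.
  - apply Rle_trans with (Rabs l + 1). have := HN n h.
    have := Rabs_triang_inv (u n) l. lra. apply Rmax_r.
Qed.

Lemma sq_kill (t w : nat -> R) k : 0 < k -> (forall n, 0 <= t n) -> (forall n, k * (t n * t n) <= w n) ->
  Un_cv w 0 -> Un_cv t 0.
Proof.
  move=> Hk Ht Hw H. apply o0_of_ev => eps He.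
  apply (ev_impl _ _ ^~ (o0_ev _ H (k * (eps * eps)) (Rmult_lt_0_compat _ _ Hk (Rmult_lt_0_compat _ _ He He)))) => n h.
  rewrite Rabs_right; last (apply Rle_ge, Ht).
  have := Hw n. have := Rle_abs (w n). have := Ht n. move=> *. apply sq_lt_lt; try lra. nra.
Qed.

Fixpoint psum (e : nat -> R) (n : nat) : R :=
  match n with O => 0 | S k => psum e k + e k end.

Lemma psum_S e n : psum e (S n) = sum_f_R0 e n.
Proof. elim: n => [|n IH] /=. ring. rewrite -IH /=. ring. Qed.

Lemma qfejer (al e : nat -> R) Sm : (forall n, 0 <= al n) -> (forall n, 0 <= e n) ->
  (forall n, al (S n) <= al n + e n) -> Un_cv (sum_f_R0 e) Sm ->
  (exists L, Un_cv al L) /\ (forall n, al n <= al O + Sm).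
Proof.
  move=> Ha He Hs Hc.
  have Hps : forall n, psum e n <= Sm.
  { case=> [|n] /=. have := series_le e Sm He Hc O. have := He O. simpl. lra.
    have := series_le e Sm He Hc n. rewrite -psum_S /=. auto. }
  set be := fun n => al n - psum e n.
  have Hdec : Un_decreasing be. { move=> n. unfold be => /=. have := Hs n. lra. }
  have Hle0 : forall n, be n <= be O.
  { elim=> [|n IH]. lra. have := Hdec n. lra. }
  split.
  - destruct (decreasing_cv be Hdec) as [lb Hlb].
    { exists Sm => r [i ->]. unfold opp_seq, be. have := Ha i. have := Hps i. lra. }
    exists (lb + Sm). have Hp : Un_cv (psum e) Sm.
    { move=> eps Heps. destruct (Hc eps Heps) as [N HN]. exists (S N) => n Hn.
      destruct n as [|n]. lia. rewrite psum_S. apply HN. lia. }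
    have := CV_plus _ _ _ _ Hlb Hp. apply Un_cv_ext => n. unfold be. ring.
  - move=> n. have := Hle0 n. have := Hps n. unfold be => /=. lra.
Qed.

Lemma hsub0 {K : Hilbert} (v : K) : hsub v hzero = v.
Proof. apply veq => w. iexp. ring. Qed.

Lemma hnorm_le_sub {K : Hilbert} (u v : K) : hnorm u <= hnorm (hsub u v) + hnorm v.
Proof. have := hnorm_sub_tri u v hzero. rewrite !hsub0. auto. Qed.

Lemma sum_lin (u v : nat -> R) c N : sum_f_R0 (fun n => c * u n + v n) N = c * sum_f_R0 u N + sum_f_R0 v N.
Proof. elim: N => [|N IH] /=. ring. rewrite IH. ring. Qed.

Lemma nsq_add {K : Hilbert} (u v : K) : hinner (hadd u v) (hadd u v) = hinner u u + 2 * hinner u v + hinner v v.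
Proof. iexp. isym u v. ring. Qed.
Lemma nsq_sub {K : Hilbert} (u v : K) : hinner (hsub u v) (hsub u v) = hinner u u - 2 * hinner u v + hinner v v.
Proof. iexp. isym u v. ring. Qed.
Lemma nsq_subscal {K : Hilbert} (u v : K) g : hinner (hsub u (hscal g v)) (hsub u (hscal g v)) = hinner u u - 2 * g * hinner v u + g * g * hinner v v.
Proof. iexp. isym u v. ring. Qed.

Lemma cv_scal c u l : Un_cv u l -> Un_cv (fun n => c * u n) (c * l).
Proof.
  move=> H. have H0 : Un_cv (fun n => u n - l) 0.
  { move=> e He. destruct (H e He) as [N HN]. exists N => n Hn. have := HN n Hn.
    unfold Rdist. rewrite Rminus_0_r. auto. }
  have := o0_scal c _ H0. move=> H1 e He. destruct (H1 e He) as [N HN]. exists N => n Hn.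
  have := HN n Hn. unfold Rdist. have ->: c * (u n - l) - 0 = c * u n - c * l by ring. auto.
Qed.

Definition hs {K : Hilbert} (g : K) (cst : R) := fun v : K => cst <= hinner v g.

Lemma closed_ext {K : Hilbert} (S S' : K -> Prop) : (forall v, S v <-> S' v) -> closedK S' -> closedK S.
Proof. move=> E H s l Hs Hc. apply E. apply (H s) => // k. apply E, Hs. Qed.
Lemma convex_ext {K : Hilbert} (S S' : K -> Prop) : (forall v, S v <-> S' v) -> convexK S' -> convexK S.
Proof. move=> E H a b t Ht Ha Hb. apply E. apply H => //; apply E => //. Qed.

Lemma le_eps X Y : (forall d, 0 < d -> X <= Y + d) -> X <= Y.
Proof. move=> H. apply Rnot_lt_le => h. have := H ((X - Y)/2) ltac:(lra). lra. Qed.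

Lemma cv_const c : Un_cv (fun _ : nat => c) c.
Proof. move=> e He. exists O => n _. unfold Rdist. rewrite Rminus_diag Rabs_R0. auto. Qed.

Lemma inner_small {K : Hilbert} (s : nat -> K) l (g : K) : strong_cv s l ->
  forall eta, 0 < eta -> ev (fun k => Rabs (hinner (hsub (s k) l) g) < eta).
Proof.
  move=> H eta He.
  have Hg : 0 < hnorm g + 1 by have := hnorm_nonneg g; lra.
  apply (ev_impl _ _ ^~ (o0_ev _ H (eta / (hnorm g + 1)) ltac:(apply Rdiv_lt_0_compat; lra))) => k h.
  have := CS (hsub (s k) l) g. rewrite Rabs_right in h; last (apply Rle_ge, hnorm_nonneg).
  have : hnorm (hsub (s k) l) * (hnorm g + 1) < eta.
  { have := Rmult_lt_compat_r (hnorm g + 1) _ _ Hg h. have ->: eta / (hnorm g + 1) * (hnorm g + 1) = eta by field; lra. auto. }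
  have := hnorm_nonneg (hsub (s k) l). have := hnorm_nonneg g. nra.
Qed.

Lemma inner_small2 {K : Hilbert} (s t : nat -> K) (g : K) : Un_cv (fun n => hnorm (hsub (s n) (t n))) 0 ->
  forall eta, 0 < eta -> ev (fun k => Rabs (hinner (hsub (s k) (t k)) g) < eta).
Proof.
  move=> H eta He.
  have Hg : 0 < hnorm g + 1 by have := hnorm_nonneg g; lra.
  apply (ev_impl _ _ ^~ (o0_ev _ H (eta / (hnorm g + 1)) ltac:(apply Rdiv_lt_0_compat; lra))) => k h.
  have := CS (hsub (s k) (t k)) g. rewrite Rabs_right in h; last (apply Rle_ge, hnorm_nonneg).
  have : hnorm (hsub (s k) (t k)) * (hnorm g + 1) < eta.
  { have := Rmult_lt_compat_r (hnorm g + 1) _ _ Hg h. have ->: eta / (hnorm g + 1) * (hnorm g + 1) = eta by field; lra. auto. }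
  have := hnorm_nonneg (hsub (s k) (t k)). have := hnorm_nonneg g. nra.
Qed.

Lemma hs_closed {K : Hilbert} (g : K) cst : closedK (hs g cst).
Proof.
  move=> s l Hs Hc. unfold hs. apply Rnot_lt_le => h.
  destruct (inner_small s l g Hc (cst - hinner l g) ltac:(lra)) as [N HN].
  have := HN N (le_n N). have := Hs N. unfold hs. rewrite inner_subl.
  move=> h1 h2. apply Rabs_def2 in h2. lra.
Qed.

Lemma hs_convex {K : Hilbert} (g : K) cst : convexK (hs g cst).
Proof.
  move=> u v t Ht. unfold hs. rewrite hinner_add !hinner_scal. move=> h1 h2. nra.
Qed.

Section FB.
Context {K : Hilbert}.
Variables (f : K -> eR) (B : K -> K) (chi eps : R) (gam : nat -> R) (x a b p : nat -> K).
Hypothesis Hprop : proper_fun f.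
Hypothesis Hlsc : lsc_fun (fun u v => hnorm (hsub u v)) f.
Hypothesis Hconv : convex_fun hadd hscal f.
Hypothesis Hcoco : forall u v, hinner (hsub (B u) (B v)) (hsub u v) >= / chi * hnorm (hsub (B u) (B v)) ^ 2.
Hypothesis Hchi : 0 < chi.
Hypothesis Heps : 0 < eps < 2 / (chi + 1).
Hypothesis Hgam : forall n, eps <= gam n <= (2 - eps) / chi.
Hypothesis Ha : abs_summable a.
Hypothesis Hb : abs_summable b.
Definition yy n := hsub (x n) (hscal (gam n) (hadd (B (x n)) (a n))).
Hypothesis Hprox : forall n, proxK (gam n) f (yy n) (p n).
Hypothesis Hx : forall n, x (S n) = hadd (p n) (b n).

Definition uu n := hscal (/ gam n) (hsub (yy n) (p n)).
Definition Gm := (2 - eps) / chi.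
Definition kap := eps * eps / chi.
Definition sa n := hnorm (a n).
Definition sb n := hnorm (b n).

Lemma eps_lt2 : eps < 2.
Proof.
  have: 2 / (chi + 1) < 2. { apply (Rmult_lt_reg_r (chi + 1)). lra.
    have ->: 2 / (chi + 1) * (chi + 1) = 2 by field; lra. nra. }
  lra.
Qed.
Lemma gam_pos n : 0 < gam n.
Proof. have := Hgam n. lra. Qed.
Lemma Gm_pos : 0 < Gm.
Proof. unfold Gm. have := eps_lt2. move=> h. apply Rdiv_lt_0_compat; lra. Qed.
Lemma kap_pos : 0 < kap.
Proof. unfold kap. apply Rdiv_lt_0_compat => //. nra. Qed.
Lemma gam_kap n : kap <= 2 * gam n / chi - gam n * gam n.
Proof.
  have := Hgam n. unfold kap. move=> [h1 h2].
  have e1 : gam n * chi <= 2 - eps.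
  { have := Rmult_le_compat_r chi _ _ (Rlt_le _ _ Hchi) h2.
    have ->: (2 - eps) / chi * chi = 2 - eps by field; lra. auto. }
  have ->: 2 * gam n / chi - gam n * gam n = gam n * (2 - gam n * chi) / chi by field; lra.
  apply Rmult_le_compat_r. left; apply Rinv_0_lt_compat => //. nra.
Qed.

Lemma u_sub n : subdiffK f (p n) (uu n).
Proof. apply prox_sub => //. apply gam_pos. Qed.

Section Fej.
Variable c : K.
Hypothesis Hc : subdiffK f c (hopp (B c)).

Definition al n := hnorm (hsub (x n) c).
Definition dB n := hsub (B (x n)) (B c).
Definition ed n := hadd (hsub (yy n) (p n)) (hscal (gam n) (B c)).
Definition rr n := 2 * al n * Gm * sa n + Gm * Gm * (sa n * sa n)
                  + 2 * (al n + Gm * sa n) * sb n + sb n * sb n.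

Lemma step n :
  al (S n) <= al n + (Gm * sa n + sb n) /\
  kap * (hnorm (dB n) * hnorm (dB n)) + hnorm (ed n) * hnorm (ed n) <= al n * al n - al (S n) * al (S n) + rr n /\
  hnorm (hadd (uu n) (B c)) <= / eps * hnorm (ed n) /\
  hnorm (hsub (x n) (p n)) <= hnorm (ed n) + Gm * hnorm (dB n) + Gm * sa n.
Proof.
  have Hg := Hgam n. have g0 := gam_pos n. set g := gam n in Hg g0 *.
  have Hmono := subdiff_mono f (p n) c (uu n) (hopp (B c)) (u_sub n) Hc.
  set d := hsub (p n) c.
  set E := hsub (hsub (x n) c) (hscal g (dB n)).
  set e := hadd d (ed n).
  have I1 : hsub (uu n) (hopp (B c)) = hscal (/ g) (ed n).
  { apply veq => z. unfold uu, ed. iexp. rewrite -/g. field. lra. }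
  rewrite I1 inner_scalr in Hmono.
  have Hde : 0 <= hinner d (ed n).
  { have h := Rinv_0_lt_compat _ g0. fold d in Hmono. nra. }
  have I2 : e = hsub E (hscal g (a n)).
  { apply veq => z. unfold e, E, d, ed, dB, yy. iexp. rewrite -/g. ring. }
  have Ne : hnorm e * hnorm e = hnorm d * hnorm d + 2 * hinner d (ed n) + hnorm (ed n) * hnorm (ed n).
  { rewrite !hnorm_sq /e nsq_add. ring. }
  have coco := Hcoco (x n) c. rewrite -/(dB n) hnorm2 in coco.
  have NE : hnorm E * hnorm E <= al n * al n - kap * (hnorm (dB n) * hnorm (dB n)).
  { rewrite /al !hnorm_sq /E nsq_subscal.
    have := gam_kap n. rewrite -/g. move=> hk.
    have := hinner_pos (dB n). nra. }
  have Hk := kap_pos.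
  have nE0 := hnorm_nonneg E. have nd0 := hnorm_nonneg d. have ned0 := hnorm_nonneg (ed n).
  have ndb := hnorm_nonneg (dB n). have al0 := hnorm_nonneg (hsub (x n) c).
  have sa0 := hnorm_nonneg (a n). have sb0 := hnorm_nonneg (b n).
  fold (al n) in al0. fold (sa n) in sa0. fold (sb n) in sb0.
  have EleA : hnorm E <= al n. { apply sq_le_le => //. nra. }
  have ele : hnorm e <= hnorm E + g * sa n.
  { rewrite I2. have := hnorm_sub_le E (hscal g (a n)). rewrite hnorm_scal Rabs_right. auto. lra. }
  have dle : hnorm d <= hnorm e. { apply sq_le_le => //. apply hnorm_nonneg. nra. }
  have alS : al (S n) <= hnorm d + sb n.
  { unfold al. rewrite Hx. have ->: hsub (hadd (p n) (b n)) c = hadd d (b n).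
    { apply veq => z. unfold d. iexp. ring. }
    apply hnorm_add. }
  have alS0 := hnorm_nonneg (hsub (x (S n)) c). fold (al (S n)) in alS0.
  have gG : g <= Gm by apply Hg.
  have gsa : g * sa n <= Gm * sa n by apply Rmult_le_compat_r.
  split; [|split; [|split]].
  - lra.
  - unfold rr.
    have h1 : al (S n) * al (S n) <= (hnorm d + sb n) * (hnorm d + sb n) by nra.
    have h2 : hnorm e * hnorm e <= (hnorm E + g * sa n) * (hnorm E + g * sa n) by nra.
    have h3 : hnorm d <= al n + Gm * sa n by nra.
    have h4 : (hnorm E + g * sa n) * (hnorm E + g * sa n) <= hnorm E * hnorm E + 2 * al n * Gm * sa n + Gm * Gm * (sa n * sa n).
    { have : hnorm E * (g * sa n) <= al n * (Gm * sa n). { apply Rmult_le_compat; nra. }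
      have : g * sa n * (g * sa n) <= Gm * sa n * (Gm * sa n). { apply Rmult_le_compat; nra. }
      nra. }
    have h5 : hnorm d * sb n <= (al n + Gm * sa n) * sb n by nra.
    nra.
  - have ->: hadd (uu n) (B c) = hscal (/ g) (ed n).
    { apply veq => z. unfold uu, ed. iexp. rewrite -/g. field. lra. }
    rewrite hnorm_scal Rabs_right. apply Rmult_le_compat_r => //. apply Rinv_le_contravar; lra.
    left; apply Rinv_0_lt_compat => //.
  - have ->: hsub (x n) (p n) = hadd (hadd (ed n) (hscal g (dB n))) (hscal g (a n)).
    { apply veq => z. unfold ed, dB, yy. iexp. rewrite -/g. ring. }
    have := hnorm_add (hadd (ed n) (hscal g (dB n))) (hscal g (a n)).
    have := hnorm_add (ed n) (hscal g (dB n)). rewrite !hnorm_scal !Rabs_right; try lra.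
    fold (sa n). move=> h h'.
    have : g * hnorm (dB n) <= Gm * hnorm (dB n) by apply Rmult_le_compat_r.
    have : g * sa n <= Gm * sa n by apply Rmult_le_compat_r.
    lra.
Qed.

Lemma fejer :
  (exists L, Un_cv al L) /\ (exists A, forall n, al n <= A) /\
  Un_cv (fun n => hnorm (dB n)) 0 /\ Un_cv (fun n => hnorm (ed n)) 0 /\
  Un_cv (fun n => hnorm (hadd (uu n) (B c))) 0 /\ Un_cv (fun n => hnorm (hsub (x n) (p n))) 0.
Proof.
  destruct Ha as [Sa HSa]. destruct Hb as [Sb HSb].
  have sa0 : forall n, 0 <= sa n by move=> n; apply hnorm_nonneg.
  have sb0 : forall n, 0 <= sb n by move=> n; apply hnorm_nonneg.
  have al0 : forall n, 0 <= al n by move=> n; apply hnorm_nonneg.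
  have HSa' : Un_cv (sum_f_R0 sa) Sa := HSa.
  have HSb' : Un_cv (sum_f_R0 sb) Sb := HSb.
  have Hsum : Un_cv (sum_f_R0 (fun n => Gm * sa n + sb n)) (Gm * Sa + Sb).
  { apply (Un_cv_ext (fun N => Gm * sum_f_R0 sa N + sum_f_R0 sb N)).
    { move=> N. rewrite sum_lin. reflexivity. }
    apply CV_plus => //. apply cv_scal => //. }
  have Gp := Gm_pos.
  destruct (qfejer al (fun n => Gm * sa n + sb n) (Gm * Sa + Sb) al0) as [[L HL] HA].
  { move=> n. have := sa0 n. have := sb0 n. nra. }
  { move=> n. apply (step n). }
  { exact Hsum. }
  set A := al O + (Gm * Sa + Sb) in HA.
  have sa_cv := series_term0 _ _ HSa'. have sb_cv := series_term0 _ _ HSb'.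
  have saB := series_term_le _ _ sa0 HSa'. have sbB := series_term_le _ _ sb0 HSb'.
  have alB : forall n, Rabs (al n) <= A. { move=> n. rewrite Rabs_right. apply HA. apply Rle_ge, al0. }
  have saB' : forall n, Rabs (sa n) <= Sa. { move=> n. rewrite Rabs_right. apply saB. apply Rle_ge, sa0. }
  have Hw : Un_cv (fun n => al n * al n - al (S n) * al (S n) + rr n) 0.
  { apply o0_plus.
    - have h := CV_minus _ _ _ _ (CV_mult _ _ _ _ HL HL) (cv_shift _ _ (CV_mult _ _ _ _ HL HL)).
      rewrite Rminus_diag in h. exact h.
    - apply (Un_cv_ext (fun n => 2 * Gm * (al n * sa n) + Gm * Gm * (sa n * sa n) + 2 * (al n * sb n)
                               + 2 * Gm * (sa n * sb n) + sb n * sb n)).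
      { move=> n. unfold rr. ring. }
      repeat apply o0_plus; try apply o0_scal.
      + apply (o0_mulb _ _ A) => //.
      + apply (o0_mulb _ _ Sa) => //.
      + apply (o0_mulb _ _ A) => //.
      + apply (o0_mulb _ _ Sa) => //.
      + apply (o0_mulb _ _ Sb) => //. move=> n. rewrite Rabs_right. apply sbB. apply Rle_ge, sb0. }
  have HdB : Un_cv (fun n => hnorm (dB n)) 0.
  { apply (sq_kill _ (fun n => al n * al n - al (S n) * al (S n) + rr n) kap kap_pos) => //. move=> n; apply hnorm_nonneg.
    move=> n. have := proj1 (proj2 (step n)). have := hnorm_nonneg (ed n). nra. }
  have Hed : Un_cv (fun n => hnorm (ed n)) 0.
  { apply (sq_kill _ (fun n => al n * al n - al (S n) * al (S n) + rr n) 1 ltac:(lra)) => //. move=> n; apply hnorm_nonneg.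
    move=> n. have := proj1 (proj2 (step n)). have := hnorm_nonneg (dB n). have := kap_pos. nra. }
  split; [by exists L|split; [by exists A|split; [done|split; [done|split]]]].
  - apply (o0_squeeze _ (fun n => / eps * hnorm (ed n))).
    + move=> n. rewrite Rabs_right. apply (step n). apply Rle_ge, hnorm_nonneg.
    + apply o0_scal => //.
  - apply (o0_squeeze _ (fun n => hnorm (ed n) + Gm * hnorm (dB n) + Gm * sa n)).
    + move=> n. rewrite Rabs_right. apply (step n). apply Rle_ge, hnorm_nonneg.
    + apply o0_plus. apply o0_plus => //. apply o0_scal => //. apply o0_scal => //.
Qed.

End Fej.
Definition lv (w : K) (cst : R) := fun v : K => exists fv, f v = Fin fv /\ fv + hinner v w <= cst.

Lemma lv_convex w cst : convexK (lv w cst).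
Proof.
  move=> u v t Ht [fu [Eu Hu]] [fv [Ev Hv]].
  destruct (Rle_lt_or_eq_dec 0 t (proj1 Ht)) as [Ht0|Ht0].
  - destruct (Rle_lt_or_eq_dec t 1 (proj2 Ht)) as [Ht1|Ht1].
    + destruct (conv_fin f u v t fu fv Hconv ltac:(lra) Eu Ev) as [fc [Ec Hfc]].
      exists fc. split => //. rewrite hinner_add !hinner_scal. nra.
    + subst t. have ->: hadd (hscal 1 u) (hscal (1 - 1) v) = u.
      { apply veq => z. iexp. ring. }
      exists fu. auto.
  - subst t. have ->: hadd (hscal 0 u) (hscal (1 - 0) v) = v.
    { apply veq => z. iexp. ring. }
    exists fv. auto.
Qed.

Lemma lv_closed w cst : closedK (lv w cst).
Proof.
  move=> s l Hs Hc. apply NNPP => Hn.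
  have [eta [Heta Hr]] : exists eta, 0 < eta /\ Rext_lt (Fin (cst - hinner l w + eta)) (f l).
  { case E: (f l) => [fl|].
    - exists ((fl + hinner l w - cst) / 2). split.
      + apply Rnot_le_lt => h. apply Hn. exists fl. split => //. lra.
      + simpl. apply Rnot_le_lt => h. apply Hn. exists fl. split => //. lra.
    - exists 1. split => //. lra. }
  destruct (Hlsc l _ Hr) as [d [Hd Hdd]].
  have Hw : 0 < hnorm w + 1 by have := hnorm_nonneg w; lra.
  destruct (ev_and _ _ (o0_ev _ Hc d Hd) (inner_small s l w Hc eta Heta)) as [N HN].
  destruct (HN N (le_n N)) as [h1 h2].
  rewrite Rabs_right in h1; last (apply Rle_ge, hnorm_nonneg).
  have := Hdd (s N) h1. destruct (Hs N) as [fk [Ek Hk]]. rewrite Ek /=.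
  rewrite inner_subl in h2. apply Rabs_def2 in h2. lra.
Qed.

Hypothesis Hz : exists z, subdiffK f z (hopp (B z)).

Lemma cluster (P : nat -> Prop) : (forall N, exists n, (N <= n)%coq_nat /\ P n) ->
  exists q, subdiffK f q (hopp (B q)) /\
    forall S : K -> Prop, closedK S -> convexK S -> ev (fun n => P n -> S (p n)) -> S q.
Proof.
  move=> HP. destruct Hz as [c0 Hc0].
  destruct (fejer c0 Hc0) as [[L HL] [[A HA] [HdB [Hed [Hu Hxp]]]]].
  destruct (conv_bounded _ _ Hxp) as [M1 HM1].
  have Hpb : forall n, hnorm (p n) <= M1 + (A + hnorm c0).
  { move=> n. have := hnorm_le_sub (p n) (x n). have := hnorm_le_sub (x n) c0.
    have := HA n. unfold al. rewrite (hnorm_sub_sym (p n)). have := HM1 n.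
    have := Rle_abs (hnorm (hsub (x n) (p n))). lra. }
  destruct (hull_point p _ P Hpb HP) as [q Hq].
  exists q. split; last first.
  { move=> S H1 H2 [N HN]. apply Hq => //. exists N => n Hn Pn. apply HN => //. }
  set w := B c0.
  have HA2 : forall x0 dl, 0 < dl ->
     / chi * hinner (hsub (B x0) w) (hsub (B x0) w) - dl <= hinner (hsub (B x0) w) (hsub x0 q).
  { move=> x0 dl Hdl. set g := hsub (B x0) w.
    set cst := / chi * hinner g g - dl - hinner x0 g.
    have E : forall v, (/ chi * hinner g g - dl <= hinner g (hsub x0 v)) <-> hs (hopp g) cst v.
    { move=> v. unfold hs, cst. rewrite inner_subr inner_oppr (hinner_sym g x0) (hinner_sym g v). lra. }
    apply (E q). apply Hq. apply hs_closed. apply hs_convex.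
    set C := hnorm (hsub x0 c0) + A.
    have Herr : Un_cv (fun n => (2 / chi * hnorm g + C) * hnorm (dB c0 n) + hnorm g * hnorm (hsub (x n) (p n))) 0.
    { apply o0_plus; apply o0_scal => //. }
    apply (ev_impl _ _ ^~ (o0_ev _ Herr dl Hdl)) => n h _. apply E.
    have coco := Hcoco x0 (x n). rewrite hnorm2 in coco.
    have I1 : hsub (B x0) (B (x n)) = hsub g (dB c0 n).
    { apply veq => z. unfold g, dB, w. iexp. ring. }
    rewrite I1 nsq_sub in coco.
    have I2 : hinner (hsub g (dB c0 n)) (hsub x0 (x n)) = hinner g (hsub x0 (p n)) - hinner g (hsub (x n) (p n)) - hinner (dB c0 n) (hsub x0 (x n)).
    { iexp. rewrite /w. ring. }
    rewrite I2 in coco.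
    have c1 := CS' g (dB c0 n). have c2 := CS'' (dB c0 n) (hsub x0 (x n)).
    have c3 := CS'' g (hsub (x n) (p n)).
    have Hxx : hnorm (hsub x0 (x n)) <= C.
    { have := hnorm_sub_tri x0 c0 (x n). rewrite (hnorm_sub_sym c0). have := HA n. unfold al, C. lra. }
    have n1 := hnorm_nonneg g. have n2 := hnorm_nonneg (dB c0 n). have n3 := hnorm_nonneg (hsub x0 (x n)).
    have n4 := hnorm_nonneg (hsub (x n) (p n)). have hdg := hinner_pos (dB c0 n).
    have ic := Rinv_0_lt_compat _ Hchi.
    have Hh := Rle_abs ((2 / chi * hnorm g + C) * hnorm (dB c0 n) + hnorm g * hnorm (hsub (x n) (p n))).
    have : hnorm (dB c0 n) * hnorm (hsub x0 (x n)) <= hnorm (dB c0 n) * C by apply Rmult_le_compat_l.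
    have : / chi * (hinner g g - 2 * hinner g (dB c0 n) + hinner (dB c0 n) (dB c0 n)) >= / chi * hinner g g - 2 / chi * (hnorm g * hnorm (dB c0 n)).
    { unfold Rdiv. have := Rmult_le_compat_l (/chi) _ _ (Rlt_le _ _ ic) c1. nra. }
    nra. }
  have HBq : B q = w.
  { apply veq0. apply Rle_antisym; last apply hinner_pos.
    apply le_eps => d Hd. have := HA2 q (d / chi) ltac:(apply Rdiv_lt_0_compat; lra).
    have ->: hsub q q = hzero by apply veq => z; iexp; ring.
    rewrite inner0r. move=> h.
    set X := hinner (hsub (B q) w) (hsub (B q) w) in h *.
    have e1 : X = chi * (/ chi * X) by field; lra.
    have e2 : chi * (d / chi) = d by field; lra.
    have h' : / chi * X <= d / chi by lra.
    have := Rmult_le_compat_l chi _ _ (Rlt_le _ _ Hchi) h'. lra. }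
  have HB2 : forall r fr dl, f r = Fin fr -> 0 < dl -> lv w (fr + hinner r w + dl) q.
  { move=> r fr dl Er Hdl. apply Hq. apply lv_closed. apply lv_convex.
    have Herr : Un_cv (fun n => (hnorm r + (M1 + (A + hnorm c0))) * hnorm (hadd (uu n) (B c0))) 0.
    { apply o0_scal => //. }
    apply (ev_impl _ _ ^~ (o0_ev _ Herr dl Hdl)) => n h _.
    destruct (u_sub n) as [fpn [Epn Hpn]]. exists fpn. split => //.
    have := Hpn r. rewrite Er /=. move=> h1.
    have I : hinner (hsub r (p n)) (uu n) = hinner (hsub r (p n)) (hadd (uu n) (B c0)) - hinner r w + hinner (p n) w.
    { unfold w. iexp. ring. }
    rewrite I in h1.
    have c1 := CS (hsub r (p n)) (hadd (uu n) (B c0)).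
    have c2 : hnorm (hsub r (p n)) * hnorm (hadd (uu n) (B c0)) <= (hnorm r + (M1 + (A + hnorm c0))) * hnorm (hadd (uu n) (B c0)).
    { apply Rmult_le_compat_r. apply hnorm_nonneg. have := hnorm_sub_le r (p n). have := Hpb n. lra. }
    have := Rle_abs ((hnorm r + (M1 + (A + hnorm c0))) * hnorm (hadd (uu n) (B c0))).
    have := Rle_abs (- hinner (hsub r (p n)) (hadd (uu n) (B c0))). rewrite Rabs_Ropp.
    lra. }
  destruct Hc0 as [fc0 [Ec0 _]].
  destruct (HB2 c0 fc0 1 Ec0 ltac:(lra)) as [fq [Eq _]].
  exists fq. split => // y.
  case Ey: (f y) => [fy|] //=.
  have : fq + hinner q w <= fy + hinner y w.
  { apply le_eps => d Hd. destruct (HB2 y fy d Ey Hd) as [fq' [Eq' H']].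
    rewrite Eq in Eq'. injection Eq' => ->. lra. }
  rewrite HBq. iexp. rewrite (hinner_sym y w) (hinner_sym q w). lra.
Qed.

Lemma fb_main : exists xbar, subdiffK f xbar (hopp (B xbar)) /\ weak_cv x xbar /\
   strong_cv (fun n => B (x n)) (B xbar).
Proof.
  destruct (cluster (fun _ => True)) as [q0 [Hz0 Hq0]].
  { move=> N. exists N. split => //. }
  exists q0. split => //.
  destruct (fejer q0 Hz0) as [[L0 HL0] [[A0 HA0] [HdB0 [_ [_ Hxp]]]]].
  split; last exact HdB0.
  have notio : forall y dl, 0 < dl -> ev (fun n => hinner (x n) y < hinner q0 y + dl).
  { move=> y dl Hdl. apply NNPP => Hn.
    have HP : forall N, exists n, (N <= n)%coq_nat /\ hinner q0 y + dl <= hinner (x n) y.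
    { move=> N. apply NNPP => Hn2. apply Hn. exists N => n Hn'.
      apply Rnot_le_lt => h. apply Hn2. exists n. split => //. }
    destruct (cluster _ HP) as [q1 [Hz1 Hq1]].
    destruct (fejer q1 Hz1) as [[L1 HL1] _].
    have Ha1 : hinner q0 y + dl / 2 <= hinner q1 y.
    { apply (Hq1 (hs y (hinner q0 y + dl / 2))). apply hs_closed. apply hs_convex.
      apply (ev_impl _ _ ^~ (inner_small2 x p y Hxp (dl / 2) ltac:(lra))) => n h Pn.
      unfold hs. rewrite inner_subl in h. apply Rabs_def2 in h. lra. }
    (* (b) Opial *)
    set g := hsub q0 q1.
    set beta := (L1 * L1 - L0 * L0 + hinner q0 q0 - hinner q1 q1) / 2.
    have Hxg : Un_cv (fun n => hinner (x n) g) beta.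
    { apply (Un_cv_ext (fun n => / 2 * (al q1 n * al q1 n - al q0 n * al q0 n + (hinner q0 q0 - hinner q1 q1)))).
      { move=> n. unfold al. rewrite !hnorm_sq. unfold g. iexp. isym q0 (x n). isym q1 (x n). field. }
      have ->: beta = / 2 * (L1 * L1 - L0 * L0 + (hinner q0 q0 - hinner q1 q1)) by unfold beta; field.
      apply cv_scal. apply CV_plus. apply CV_minus; apply CV_mult => //. apply cv_const. }
    have Hpg : forall eta, 0 < eta -> ev (fun n => Rabs (hinner (p n) g - beta) < eta).
    { move=> eta He. destruct (cv_unfold _ _ Hxg (eta / 2) ltac:(lra)) as [N HN].
      apply (ev_impl _ _ ^~ (ev_and _ _ (ex_intro _ N HN) (inner_small2 x p g Hxp (eta / 2) ltac:(lra)))).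
      move=> n [h1 h2]. rewrite inner_subl in h2. apply Rabs_def2 in h1. apply Rabs_def2 in h2.
      apply Rabs_def1; lra. }
    have Hboth : forall (P : nat -> Prop) q,
       (forall S : K -> Prop, closedK S -> convexK S -> ev (fun n => P n -> S (p n)) -> S q) ->
       hinner q g = beta.
    { move=> P q Hq. apply Rle_antisym.
      - apply le_eps => eta He. have : hs (hopp g) (- beta - eta) q.
        { apply Hq. apply hs_closed. apply hs_convex.
          apply (ev_impl _ _ ^~ (Hpg eta He)) => n h _. unfold hs. rewrite inner_oppr.
          apply Rabs_def2 in h. lra. }
        unfold hs. rewrite inner_oppr. lra.
      - apply le_eps => eta He. have : hs g (beta - eta) q.
        { apply Hq. apply hs_closed. apply hs_convex.
          apply (ev_impl _ _ ^~ (Hpg eta He)) => n h _. unfold hs.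
          apply Rabs_def2 in h. lra. }
        unfold hs. lra. }
    have E0 := Hboth _ _ Hq0. have E1 := Hboth _ _ Hq1.
    have : q0 = q1. { apply veq0. rewrite -/g. have ->: hinner g g = hinner q0 g - hinner q1 g by unfold g at 1; rewrite inner_subl. lra. }
    move=> Heq. rewrite Heq in Ha1. lra. }
  move=> y. apply cv_fold => e He.
  destruct (ev_and _ _ (notio y (e/2) ltac:(lra)) (notio (hopp y) (e/2) ltac:(lra))) as [N HN].
  exists N => n Hn. destruct (HN n Hn) as [h1 h2]. rewrite !inner_oppr in h2.
  apply Rabs_def1; lra.
Qed.

End FB.

Section SumL.
Variable T : eqType.
Definition sumL (l : seq T) (F : T -> R) := foldr Rplus 0 (map F l).

Lemma sumL_add l F G : sumL l (fun j => F j + G j) = sumL l F + sumL l G.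
Proof. elim: l => [|j l IH] /=. unfold sumL => /=. ring. unfold sumL in *. simpl. rewrite IH. ring. Qed.
Lemma sumL_scal l c F : sumL l (fun j => c * F j) = c * sumL l F.
Proof. elim: l => [|j l IH]; unfold sumL in *; simpl. ring. rewrite IH. ring. Qed.
Lemma sumL_ext l F G : (forall j, F j = G j) -> sumL l F = sumL l G.
Proof. move=> H. elim: l => [|j l IH]; unfold sumL in *; simpl => //. rewrite IH H //. Qed.
Lemma sumL_le l F G : (forall j, F j <= G j) -> sumL l F <= sumL l G.
Proof. move=> H. elim: l => [|j l IH]; unfold sumL in *; simpl. lra. have := H j. lra. Qed.
Lemma sumL_nonneg l F : (forall j, 0 <= F j) -> 0 <= sumL l F.
Proof. move=> H. elim: l => [|j l IH]; unfold sumL in *; simpl. lra. have := H j. lra. Qed.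
Lemma sumL_term l F i : (forall j, 0 <= F j) -> i \in l -> F i <= sumL l F.
Proof.
  move=> H. elim: l => [|j l IH] //=. rewrite in_cons => /orP [/eqP ->|Hi].
  - unfold sumL => /=. have := sumL_nonneg l F H. unfold sumL. lra.
  - unfold sumL in *; simpl. have := IH Hi. have := H j. lra.
Qed.
Lemma sumL_single l F i : (forall j, j <> i -> F j = 0) -> uniq l -> i \in l -> sumL l F = F i.
Proof.
  move=> H. elim: l => [|j l IH] //= /andP [Hj Hu]. rewrite in_cons => /orP [/eqP Eij|Hi].
  - subst j. unfold sumL in *; simpl.
    have ->: foldr Rplus 0 (map F l) = 0.
    { clear IH. elim: l Hj {Hu} => [|k l IH2] //=. rewrite in_cons negb_or => /andP [Hk Hl].
      rewrite H. rewrite IH2 //. ring. move=> E. subst k. move: Hk. rewrite eqxx. done. }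
    ring.
  - unfold sumL in *; simpl. rewrite IH //. rewrite H. ring. move=> E. subst j. move: Hj. rewrite Hi. done.
Qed.
Lemma sumL_sq_le l F : (forall j, 0 <= F j) -> sumL l (fun j => F j * F j) <= sumL l F * sumL l F.
Proof.
  move=> H. elim: l => [|j l IH]; unfold sumL in *; simpl. lra.
  have := H j. have := sumL_nonneg l F H. unfold sumL. nra.
Qed.
Lemma sumL_bound l F c : (forall j, F j <= c) -> sumL l F <= INR (size l) * c.
Proof.
  move=> H. elim: l => [|j l IH]. unfold sumL; simpl. lra.
  have E : INR (size (j :: l)) = INR (size l) + 1 by apply S_INR.
  rewrite E. unfold sumL in *; simpl. have := H j. lra.
Qed.
Lemma sumL_cv l (F : T -> nat -> R) (L : T -> R) : (forall j, Un_cv (F j) (L j)) ->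
  Un_cv (fun n => sumL l (fun j => F j n)) (sumL l L).
Proof.
  move=> H. elim: l => [|j l IH]; unfold sumL in *; simpl. apply cv_const.
  apply CV_plus => //.
Qed.
Lemma sumL_swap l (F : nat -> T -> R) N :
  sum_f_R0 (fun n => sumL l (F n)) N = sumL l (fun j => sum_f_R0 (fun n => F n j) N).
Proof.
  elim: N => [|N IH] /=. reflexivity. rewrite IH. rewrite -sumL_add. reflexivity.
Qed.
Lemma ev_allL (l : seq T) (Q : T -> nat -> Prop) : (forall j, ev (Q j)) -> ev (fun n => forall j : T, j \in l -> Q j n).
Proof.
  move=> H. elim: l => [|j l IH]. exists O => n _ j. done.
  apply (ev_impl _ _ ^~ (ev_and _ _ (H j) IH)) => n [h1 h2] k. rewrite in_cons => /orP [/eqP ->|Hk] //.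
  apply h2 => //.
Qed.
End SumL.

Section PH.
Variables (m : nat) (H : 'I_m -> Hilbert).

Definition pzero : Prod H := fun i => hzero.
Definition popp (x : Prod H) : Prod H := fun i => hopp (x i).

Lemma sumI_L (F : 'I_m -> R) : sumI F = sumL _ (enum 'I_m) F.
Proof. reflexivity. Qed.

Lemma inI (i : 'I_m) : i \in enum 'I_m.
Proof. by rewrite mem_enum. Qed.

Lemma p_add_assoc (x y z : Prod H) : padd x (padd y z) = padd (padd x y) z.
Proof. apply functional_extensionality_dep => i. apply hadd_assoc. Qed.
Lemma p_add_comm (x y : Prod H) : padd x y = padd y x.
Proof. apply functional_extensionality_dep => i. apply hadd_comm. Qed.
Lemma p_add_zero (x : Prod H) : padd x pzero = x.
Proof. apply functional_extensionality_dep => i. apply hadd_zero. Qed.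
Lemma p_add_opp (x : Prod H) : padd x (popp x) = pzero.
Proof. apply functional_extensionality_dep => i. apply hadd_opp. Qed.
Lemma p_scal_one (x : Prod H) : pscal 1 x = x.
Proof. apply functional_extensionality_dep => i. apply hscal_one. Qed.
Lemma p_scal_assoc a b (x : Prod H) : pscal a (pscal b x) = pscal (a * b) x.
Proof. apply functional_extensionality_dep => i. apply hscal_assoc. Qed.
Lemma p_scal_distr_l a (x y : Prod H) : pscal a (padd x y) = padd (pscal a x) (pscal a y).
Proof. apply functional_extensionality_dep => i. apply hscal_distr_l. Qed.
Lemma p_scal_distr_r a b (x : Prod H) : pscal (a + b) x = padd (pscal a x) (pscal b x).
Proof. apply functional_extensionality_dep => i. apply hscal_distr_r. Qed.
Lemma p_inner_sym (x y : Prod H) : pinner x y = pinner y x.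
Proof. unfold pinner. rewrite !sumI_L. apply sumL_ext => i. apply hinner_sym. Qed.
Lemma p_inner_add (x y z : Prod H) : pinner (padd x y) z = pinner x z + pinner y z.
Proof. unfold pinner. rewrite !sumI_L -sumL_add. apply sumL_ext => i. apply hinner_add. Qed.
Lemma p_inner_scal a (x y : Prod H) : pinner (pscal a x) y = a * pinner x y.
Proof. unfold pinner. rewrite !sumI_L -sumL_scal. apply sumL_ext => i. apply hinner_scal. Qed.
Lemma p_inner_pos (x : Prod H) : 0 <= pinner x x.
Proof. unfold pinner. rewrite sumI_L. apply sumL_nonneg => i. apply hinner_pos. Qed.
Lemma p_comp_le (x : Prod H) i : hinner (x i) (x i) <= pinner x x.
Proof. unfold pinner. rewrite sumI_L. apply (sumL_term _ _ (fun j => hinner (x j) (x j))). move=> j; apply hinner_pos. apply inI. Qed.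
Lemma p_inner_def (x : Prod H) : pinner x x = 0 -> x = pzero.
Proof.
  move=> E. apply functional_extensionality_dep => i. apply hinner_def.
  have := p_comp_le x i. have := hinner_pos (x i). lra.
Qed.

Lemma p_complete (u : nat -> Prod H) :
    (forall eps, 0 < eps -> exists N, forall p q, le N p -> le N q ->
        sqrt (pinner (padd (u p) (popp (u q))) (padd (u p) (popp (u q)))) < eps) ->
    exists l, forall eps, 0 < eps -> exists N, forall n, le N n ->
        sqrt (pinner (padd (u n) (popp l)) (padd (u n) (popp l))) < eps.
Proof.
  move=> Hc.
  have Hcomp : forall i, exists li : H i, forall eps, 0 < eps -> exists N, forall n, le N n ->
        sqrt (hinner (hadd (u n i) (hopp li)) (hadd (u n i) (hopp li))) < eps.
  { move=> i. apply (hcomplete (fun n => u n i)) => eps He.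
    destruct (Hc eps He) as [N HN]. exists N => p q Hp Hq.
    apply Rle_lt_trans with (2 := HN p q Hp Hq). apply sqrt_le_1_alt.
    apply (p_comp_le (padd (u p) (popp (u q))) i). }
  destruct (dchoice _ Hcomp) as [l Hl]. exists l => eps He.
  set e' := eps / (INR m + 1).
  have Hm : 0 <= INR m by apply pos_INR.
  have He' : 0 < e' by apply Rdiv_lt_0_compat; lra.
  have Hev : ev (fun n => forall i : 'I_m, i \in enum 'I_m ->
        sqrt (hinner (hadd (u n i) (hopp (l i))) (hadd (u n i) (hopp (l i)))) < e').
  { apply ev_allL => i. destruct (Hl i e' He') as [N HN]. exists N => n Hn. apply HN. exact Hn. }
  destruct Hev as [N HN]. exists N => n Hn.
  set v := padd (u n) (popp l).
  have Hs : pinner v v <= INR m * (e' * e').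
  { unfold pinner. rewrite sumI_L.
    have Sz : INR (size (enum 'I_m)) = INR m by rewrite size_enum_ord.
    rewrite -Sz. apply sumL_bound => i. have := HN n Hn i (inI i). rewrite /v /padd /popp.
    set w := hadd (u n i) (hopp (l i)). move=> h. have := hinner_pos w.
    have := sqrt_pos (hinner w w). have := sqrt_sqrt (hinner w w) (hinner_pos w). nra. }
  have He2 : INR m * (e' * e') < eps * eps.
  { have ->: INR m * (e' * e') = eps * eps * (INR m / ((INR m + 1) * (INR m + 1))) by unfold e'; field; lra.
    have : INR m / ((INR m + 1) * (INR m + 1)) < 1.
    { apply (Rmult_lt_reg_r ((INR m + 1) * (INR m + 1))). nra.
      have ->: INR m / ((INR m + 1) * (INR m + 1)) * ((INR m + 1) * (INR m + 1)) = INR m by field; lra. nra. }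
    move=> h. have := Rmult_lt_compat_l (eps * eps) _ _ ltac:(nra) h. lra. }
  apply sq_lt_lt. apply sqrt_pos. lra. rewrite sqrt_sqrt. lra. apply p_inner_pos.
Qed.

Definition PH : Hilbert := mkHilbert (Prod H) pzero padd popp pscal pinner
  p_add_assoc p_add_comm p_add_zero p_add_opp p_scal_one p_scal_assoc p_scal_distr_l p_scal_distr_r
  p_inner_sym p_inner_add p_inner_scal p_inner_pos p_inner_def p_complete.

End PH.
Arguments pzero {m H}.
Arguments popp {m H} x.
Arguments PH {m} H.

Section Fin.
Variables (m : nat) (H : 'I_m -> Hilbert).

Lemma upd_same (x : Prod H) i v : upd x i v i = v.
Proof. rewrite /upd. case: eqP => [e|ne]. by rewrite (eq_irrelevance e (erefl i)). by exfalso. Qed.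
Lemma upd_other (x : Prod H) i v j : i <> j -> upd x i v j = x j.
Proof. rewrite /upd. case: eqP => //. Qed.
Lemma upd_id (x : Prod H) i : upd x i (x i) = x.
Proof. apply functional_extensionality_dep => j. rewrite /upd. case: eqP => // e. by case: j / e. Qed.

Lemma pinner_upd (x : Prod H) i v (u : Prod H) : pinner (psub (upd x i v) x) u = hinner (hsub v (x i)) (u i).
Proof.
  unfold pinner. rewrite sumI_L.
  rewrite (sumL_single _ _ (fun j => hinner (hsub (upd x i v j) (x j)) (u j)) i).
  - by rewrite upd_same.
  - move=> j Hj. rewrite upd_other. iexp. ring. move=> E; apply Hj; by rewrite E.
  - apply enum_uniq.
  - apply inI.
Qed.

Lemma pinner_emb (x : Prod H) i (y : H i) : pinner x (upd (pzero) i y) = hinner (x i) y.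
Proof.
  unfold pinner. rewrite sumI_L.
  rewrite (sumL_single _ _ (fun j => hinner (x j) (upd (pzero) i y j)) i).
  - by rewrite upd_same.
  - move=> j Hj. rewrite upd_other. rewrite /pzero. apply inner0r. move=> E; apply Hj; by rewrite E.
  - apply enum_uniq.
  - apply inI.
Qed.

End Fin.

Theorem theorem3p4
  (m : nat) (Hm : le 2 m) (H : 'I_m -> Hilbert)
  (f : Prod H -> eR) (g : 'I_m -> Prod H -> eR)
  (G : forall i : 'I_m, Prod H -> hcar (H i))
  (Hf : Gamma0_prod f)
  (Hg_conv : forall i (x : Prod H), convex_fun (@hadd (H i)) (@hscal (H i))
                                      (fun v => g i (upd x i v)))
  (Hg_grad : forall i (x : Prod H), has_gradient (fun v => g i (upd x i v)) (x i) (G i x))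
  (Hmono : forall x y : Prod H,
      0 <= sumI (fun i => hinner (hsub (G i x) (G i y)) (hsub (x i) (y i))))
  (Hz : exists z : Prod H, subdiff_prod f z (fun i => hopp (G i z)))
  (chi : R) (Hchi : 0 < chi)
  (Hcoco : forall x y : Prod H,
      sumI (fun i => hinner (hsub (G i x) (G i y)) (hsub (x i) (y i)))
      >= / chi * sumI (fun i => hnorm (hsub (G i x) (G i y)) ^ 2))
  (eps : R) (Heps : 0 < eps < 2 / (chi + 1))
  (gam : nat -> R) (Hgam : forall n, eps <= gam n <= (2 - eps) / chi)
  (x : nat -> Prod H) (a b : nat -> Prod H)
  (Ha : forall i, abs_summable (fun n => a n i))
  (Hb : forall i, abs_summable (fun n => b n i))
  (Hiter : forall n,
      let y : Prod H := fun i => hsub (x n i) (hscal (gam n) (hadd (G i (x n)) (a n i))) in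
      exists p : Prod H, is_prox_prod (gam n) f y p /\ x (S n) = padd p (b n)) :
  exists xbar : Prod H,
    solves_P f g xbar /\
    forall i, weak_cv (fun n => x n i) (xbar i) /\
              strong_cv (fun n => G i (x n)) (G i xbar).
Proof.
  destruct Hf as [Hprop [Hlsc Hconv]].
  pose K := PH H.
  destruct (fchoice (fun n (p : Prod H) => is_prox_prod (gam n) f
     (fun i => hsub (x n i) (hscal (gam n) (hadd (G i (x n)) (a n i)))) p /\ x (S n) = padd p (b n))) as [pp Hpp].
  { move=> n. exact (Hiter n). }
  pose B : hcar K -> hcar K := fun (y : Prod H) i => G i y.
  have Hcoco' : forall u v : K, hinner (hsub (B u) (B v)) (hsub u v) >= / chi * hnorm (hsub (B u) (B v)) ^ 2.
  { move=> u v. rewrite hnorm2. have := Hcoco u v.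
    have ->: sumI (fun i => hnorm (hsub (G i u) (G i v)) ^ 2) = sumI (fun i => hinner (hsub (G i u) (G i v)) (hsub (G i u) (G i v))).
    { rewrite !sumI_L. apply sumL_ext => i. apply hnorm2. }
    auto. }
  have Hsum : forall (c : nat -> Prod H), (forall i, abs_summable (fun n => c n i)) -> @abs_summable K c.
  { move=> c Hc. destruct (fchoice (fun i (S : R) => Un_cv (fun N => sum_f_R0 (fun n => hnorm (c n i)) N) S) Hc) as [Si HSi].
    have Hs : Un_cv (fun N => sum_f_R0 (fun n => sumI (fun i => hnorm (c n i))) N) (sumI Si).
    { apply (Un_cv_ext (fun N => sumL _ (enum 'I_m) (fun i => sum_f_R0 (fun n => hnorm (c n i)) N))).
      { move=> N. rewrite (sumL_swap _ _ (fun n i => hnorm (c n i))). reflexivity. }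
      apply sumL_cv. exact HSi. }
    destruct (Rseries_CV_comp (fun n => @hnorm K (c n)) (fun n => sumI (fun i => hnorm (c n i)))) as [l Hl].
    { move=> n. split. apply hnorm_nonneg.
      rewrite sumI_L. apply sq_le_le. apply hnorm_nonneg. apply sumL_nonneg => i; apply hnorm_nonneg.
      rewrite hnorm_sq. apply Rle_trans with (sumL _ (enum 'I_m) (fun i => hnorm (c n i) * hnorm (c n i))).
      { apply Req_le. unfold K. simpl. unfold pinner. rewrite sumI_L. apply sumL_ext => i. by rewrite hnorm_sq. }
      apply sumL_sq_le => i; apply hnorm_nonneg. }
    { exists (sumI Si). exact Hs. }
    exists l. exact Hl. }
  destruct (@fb_main K f B chi eps gam x a b pp Hprop Hlsc Hconv Hcoco' Hchi Heps Hgam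
     (Hsum a Ha) (Hsum b Hb) (fun n => proj1 (Hpp n)) (fun n => proj2 (Hpp n))) as [xb [Hsub [Hweak Hstrong]]].
  { destruct Hz as [z Hz']. exists z. exact Hz'. }
  exists xb. split.
  - move=> i v. rewrite upd_id.
    destruct Hsub as [fx [Efx Hfx]].
    destruct (grad_sub (fun v => g i (upd xb i v)) (xb i) (G i xb) (Hg_conv i xb) (Hg_grad i xb)) as [gx [Egx Hgx]].
    simpl in Egx. rewrite upd_id in Egx. rewrite Efx Egx.
    have h1 := Hfx (upd xb i v). have h2 := Hgx v. simpl in h2.
    have E : @hinner K (@hsub K (upd xb i v : hcar K) xb) (@hopp K (B xb)) = - hinner (hsub v (xb i)) (G i xb).
    { rewrite -inner_oppr. exact (pinner_upd m H xb i v (popp (B xb))). }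
    rewrite E in h1.
    case Ef: (f (upd xb i v)) => [fv|]; case Eg: (g i (upd xb i v)) => [gv|] //=.
    rewrite Ef /= in h1. rewrite Eg /= in h2. lra.
  - move=> i. split.
    + move=> y. have := Hweak (upd (pzero) i y).
      move=> h. rewrite -(pinner_emb m H xb i y).
      apply: (Un_cv_ext _ _ _ _ h). move=> n. exact (pinner_emb m H (x n) i y).
    + apply (o0_squeeze _ (fun n => @hnorm K (hsub (B (x n)) (B xb)))); last exact Hstrong.
      move=> n. rewrite Rabs_right; last (apply Rle_ge, hnorm_nonneg).
      unfold hnorm. apply sqrt_le_1_alt. exact (p_comp_le m H (@hsub K (B (x n)) (B xb)) i).
Qed.
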